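(* Let $M$ be a smooth manifold, $\nabla$ an affine connection on $M$, and $(\hat J_1,\hat J_2,\hat J_3)$ a generalized almost para-quaternionic structure on $M$. If $\hat J_1$ and $\hat J_2$ are $\nabla$-integrable, then $\hat J_3$ is $\nabla$-integrable. Moreover, if $\hat J_2$ and $\hat J_3$ are $\nabla$-integrable, then $\hat J_1$ is $\nabla$-integrable.
   Context: A generalized almost para-quaternionic structure: endomorphisms $\hat J_1,\hat J_2,\hat J_3$ of $TM\oplus T^*M$ with $\hat J_1^2=-I$, $\hat J_2^2=\hat J_3^2=I$, $\hat J_1\hat J_2=-\hat J_2\hat J_1$, $\hat J_3=\hat J_1\hat J_2$. The $\nabla$-bracket: $[X+\eta,Y+\beta]_\nabla:=[X,Y]+\nabla_X\beta-\nabla_Y\eta$. $N^\nabla_{\hat K}(\sigma,\tau):=[\hat K\sigma,\hat K\tau]_\nabla-\hat K[\hat K\sigma,\tau]_\nabla-\hat K[\sigma,\hat K\tau]_\nabla+\hat K^2[\sigma,\tau]_\nabla$; $\hat K$ is $\nabla$-integrable if $N^\nabla_{\hat K}=0$. *)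

(* Defs.v *)
(* Abstract model of the sections of TM and T*M. *)
From HB Require Import structures.
From mathcomp Require Import all_boot all_order all_algebra.
From mathcomp Require Import reals.
Set Implicit Arguments. Unset Strict Implicit. Unset Printing Implicit Defensive.
Import Order.TTheory GRing.Theory Num.Theory.
Local Open Scope ring_scope.


Definition nabla_bracket (R : realType) (XM Om : lmodType R)
    (lie : XM -> XM -> XM) (nabla : XM -> Om -> Om)
    (s t : XM * Om) : XM * Om :=
  (lie s.1 t.1, nabla s.1 t.2 - nabla t.1 s.2).

Definition nabla_nijenhuis (R : realType) (XM Om : lmodType R)
    (lie : XM -> XM -> XM) (nabla : XM -> Om -> Om)
    (K : XM * Om -> XM * Om) (s t : XM * Om) : XM * Om :=
  let br := nabla_bracket lie nabla in
  br (K s) (K t) - K (br (K s) t) - K (br s (K t)) + K (K (br s t)).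

Definition nabla_integrable (R : realType) (XM Om : lmodType R)
    (lie : XM -> XM -> XM) (nabla : XM -> Om -> Om)
    (K : XM * Om -> XM * Om) : Prop :=
  forall s t, nabla_nijenhuis lie nabla K s t = 0.

Definition gen_almost_para_quaternionic (R : realType) (XM Om : lmodType R)
    (J1 J2 J3 : XM * Om -> XM * Om) : Prop :=
  [/\ forall s, J1 (J1 s) = - s,
      forall s, J2 (J2 s) = s,
      forall s, J3 (J3 s) = s,
      forall s, J1 (J2 s) = - J2 (J1 s)
    & forall s, J3 s = J1 (J2 s)].

(* Minimal structural properties of the Lie bracket of vector fields and of an
   affine connection acting on 1-forms, at the level of R-vector spaces. *)
Definition lie_bracket_like (R : realType) (XM : lmodType R)
    (lie : XM -> XM -> XM) : Prop :=
  [/\ forall Y, linear (lie^~ Y), forall X, linear (lie X)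
    & forall X Y, lie X Y = - lie Y X].

Definition connection_like (R : realType) (XM Om : lmodType R)
    (nabla : XM -> Om -> Om) : Prop :=
  (forall b, linear (nabla^~ b)) /\ (forall X, linear (nabla X)).

(* Main.v *)
Require Import Defs.
From HB Require Import structures.
From mathcomp Require Import all_boot all_order all_algebra.
From mathcomp Require Import reals.
Import GRing.Theory Num.Theory.
Local Open Scope ring_scope.
Section Refl.
Variable V : zmodType.
Inductive ex := EA of nat | ED of ex & ex | EN of ex | E0.
Fixpoint ev (env : seq V) e : V := match e with
 | EA i => nth 0 env i | ED a b => ev env a + ev env b | EN a => - ev env a | E0 => 0 end.
Fixpoint coef e (i : nat) : int := match e with
 | EA j => ((i == j) : nat)%:Z | ED a b => coef a i + coef b i | EN a => - coef a i | E0 => 0 end.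
Lemma ev_coef env e : ev env e = \sum_(i < size env) (nth 0 env i) *~ coef e i.
Proof.
elim: e => [j|a iha b ihb|a iha|] /=.
- case: (ltnP j (size env)) => hj.
  + rewrite (bigD1 (Ordinal hj)) //= eqxx mulr1z big1 ?addr0 // => i /eqP hi.
    have -> : (i == j :> nat) = false by apply/negP => /eqP h; apply: hi; apply: val_inj.
    by rewrite mulr0z.
  + rewrite nth_default // big1 // => i _.
    have -> : (i == j :> nat) = false by apply/negP => /eqP h; move: (ltn_ord i); rewrite h ltnNge hj.
    by rewrite mulr0z.
- by rewrite iha ihb -big_split /=; apply: eq_bigr => i _; rewrite mulrzDr.
- by rewrite iha -sumrN; apply: eq_bigr => i _; rewrite mulrNz.
- by rewrite big1 // => i _; rewrite mulr0z.
Qed.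
Lemma ex_sound env e1 e2 :
  all (fun i => coef e1 i == coef e2 i) (iota 0 (size env)) -> ev env e1 = ev env e2.
Proof.
move=> /allP h; rewrite !ev_coef; apply: eq_bigr => i _.
by rewrite (eqP (h i _)) // mem_iota /= add0n ltn_ord.
Qed.
End Refl.

Ltac lookup x env := match env with
 | x :: _ => constr:(O)
 | _ :: ?t => let n := lookup x t in constr:(S n) end.
Ltac addatom x env := match env with | context [x :: _] => env | _ => constr:(x :: env) end.
Ltac collect t env := match t with
 | (?a + ?b)%R => let e1 := collect a env in collect b e1
 | (- ?a)%R => collect a env
 | 0%R => env
 | _ => addatom t env end.
Ltac reify t env := match t with
 | (?a + ?b)%R => let x := reify a env in let y := reify b env in constr:(ED x y)
 | (- ?a)%R => let x := reify a env in constr:(EN x)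
 | 0%R => constr:(E0)
 | _ => let n := lookup t env in constr:(EA n) end.
Ltac zmod_eq :=
  match goal with |- ?l = ?r => let V := type of l in
    let env0 := collect l (@nil V) in let env := collect r env0 in
    let el := reify l env in let er := reify r env in
    change (@ev _ env el = @ev _ env er); apply: ex_sound; vm_compute; reflexivity end.

Section Gen.
Variable V : zmodType.
Variable br : V -> V -> V.
Hypothesis brDl : forall a b c, br (a + b) c = br a c + br b c.
Hypothesis brDr : forall a b c, br c (a + b) = br c a + br c b.
Lemma br0l c : br 0 c = 0.
Proof. by apply: (addrI (br 0 c)); rewrite -brDl !addr0. Qed.
Lemma br0r c : br c 0 = 0.
Proof. by apply: (addrI (br c 0)); rewrite -brDr !addr0. Qed.
Lemma brNl a c : br (- a) c = - br a c.
Proof. by apply: (addrI (br a c)); rewrite -brDl !subrr br0l. Qed.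
Lemma brNr a c : br c (- a) = - br c a.
Proof. by apply: (addrI (br c a)); rewrite -brDr !subrr br0r. Qed.

Definition Nij (A : V -> V) s t :=
  br (A s) (A t) - A (br (A s) t) - A (br s (A t)) + A (A (br s t)).

Variables I J : {additive V -> V}.
Hypothesis II : forall v, I (I v) = - v.
Hypothesis JJ : forall v, J (J v) = v.
Hypothesis JI : forall v, J (I v) = - I (J v).

Ltac norm := rewrite /Nij; do ![progress rewrite ?opprD ?(raddfD I) ?(raddfN I) ?(raddfD J) ?(raddfN J) ?brDl ?brDr ?brNl ?brNr ?II ?JJ ?JI ?opprK].

Lemma key1 x y :
 Nij (fun v => I (J v)) x y + Nij (fun v => I (J v)) x y = - Nij I x y - J (Nij I x (J y)) - J (Nij I (J x) y)
   + Nij I (J x) (J y) + Nij J x y - I (Nij J x (I y)) - I (Nij J (I x) y)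
   + Nij J (I x) (I y).
Proof. norm. zmod_eq. Qed.

Lemma key2 x y :
 Nij I x y + Nij I x y = - Nij J x y - I (Nij J x (I y)) - I (Nij J (I x) y)
   + Nij J (I x) (I y) - Nij (fun v => I (J v)) x y - I (Nij (fun v => I (J v)) x (I y)) - I (Nij (fun v => I (J v)) (I x) y)
   + Nij (fun v => I (J v)) (I x) (I y).
Proof. norm; zmod_eq. Qed.
End Gen.

Lemma lin_add (R : realType) (U W : lmodType R) (f : U -> W) :
  linear f -> forall u v, f (u + v) = f u + f v.
Proof. by move=> h u v; rewrite -[u]scale1r h !scale1r. Qed.
Arguments lin_add {R U W f}.

Theorem proposition2p12 (R : realType) (XM Om : lmodType R)
    (lie : XM -> XM -> XM) (nabla : XM -> Om -> Om)
    (J1 J2 J3 : {linear (XM * Om)%type -> (XM * Om)%type}) :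
  lie_bracket_like lie ->
  connection_like nabla ->
  gen_almost_para_quaternionic J1 J2 J3 ->
  (nabla_integrable lie nabla J1 -> nabla_integrable lie nabla J2 ->
     nabla_integrable lie nabla J3) /\
  (nabla_integrable lie nabla J2 -> nabla_integrable lie nabla J3 ->
     nabla_integrable lie nabla J1).
Proof.
move=> [lD1 lD2 _] [nD1 nD2] [H1 H2 H3 H4 H5].
set br := nabla_bracket lie nabla.
have brDl : forall a b c, br (a + b) c = br a c + br b c.
  move=> [a1 a2] [b1 b2] [c1 c2]; rewrite /br /nabla_bracket /=.
  rewrite (lin_add (lD1 c1)) (lin_add (nD1 c2)) (lin_add (nD2 c1)).
  by apply: injective_projections => /=; zmod_eq.
have brDr : forall a b c, br c (a + b) = br c a + br c b.
  move=> [a1 a2] [b1 b2] [c1 c2]; rewrite /br /nabla_bracket /=.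
  rewrite (lin_add (lD2 c1)) (lin_add (nD1 c2)) (lin_add (nD2 c1)).
  by apply: injective_projections => /=; zmod_eq.
have JI : forall v, J2 (J1 v) = - J1 (J2 v) by move=> v; rewrite H4 opprK.
have N3 : forall s t, nabla_nijenhuis lie nabla J3 s t = @Nij _ br (fun v => J1 (J2 v)) s t.
  by move=> s t; rewrite /nabla_nijenhuis /Nij !H5.
have half : forall v : (XM * Om)%type, v + v = 0 -> v = 0.
  move=> v h; have : (2%:R : R) *: v = 0 by rewrite scaler_nat mulr2n.
  by move/eqP; rewrite scaler_eq0 pnatr_eq0 /= => /eqP.
split.
- move=> HI HJ s t; rewrite N3; apply: half.
  have HI' : forall s t, @Nij _ br J1 s t = 0 := HI.
  have HJ' : forall s t, @Nij _ br J2 s t = 0 := HJ.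
  by rewrite (@key1 _ br brDl brDr J1 J2 H1 H2 JI) !HI' !HJ' !raddf0 ?oppr0 ?addr0 ?subr0.
- move=> HJ HK s t; apply: half.
  have HK' : forall s t, @Nij _ br (fun v => J1 (J2 v)) s t = 0 by move=> s' t'; rewrite -N3.
  have HJ' : forall s t, @Nij _ br J2 s t = 0 := HJ.
  have -> : nabla_nijenhuis lie nabla J1 s t = @Nij _ br J1 s t by [].
  by rewrite (@key2 _ br brDl brDr J1 J2 H1 H2 JI) !HK' !HJ' !raddf0 ?oppr0 ?addr0 ?subr0.
Qed.
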